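(* Consider the Histogram Partitioning algorithm (described in the context) on $N$ distinct keys over $p$ processors, where in round $j$ each key of $\gamma_j$ is sampled independently with probability $\frac{cp}{|\gamma_j|\log^* p}$ with $c=3\ln 2.5$. Let $t\ge 1$. If the number $k$ of unachieved splitters at the start of round $j$ satisfies $k\le\frac{p}{t\log^* p}$, then with high probability the number of unachieved splitters after round $j$ is at most $\max\left(\frac{p}{\log p\,\log^* p},\ \frac{p}{t\,2^t\log^* p}\right)$.
   Context: Setting: $N$ distinct keys from a totally ordered set are distributed across $p$ processors, $N/p$ keys per processor. For $\ell\in\{1,\dots,p-1\}$, the target range of splitter $\ell$ is the rank range $[\frac{N\ell}{p},\frac{N\ell}{p}+\frac{N}{p}]$; splitter $\ell$ is achieved in a round if some key with rank in this range is sampled in that round (and stays achieved afterwards). Histogram Partitioning proceeds in rounds; in round $j$, keys are sampled independently from a set $\gamma_j$ ($\gamma_1$ = all keys), and the global ranks of the samples are computed and made known to all processors. For each unachieved splitter $\ell$, $L_j(\ell)$ is the largest key sampled before round $j$ with rank below $\frac{N\ell}{p}$ (or the smallest key) and $U_j(\ell)$ the smallest key sampled before round $j$ with rank above $\frac{N\ell}{p}+\frac{N}{p}$ (or the largest key); $\gamma_j$ is the union over splitters $\ell$ unachieved before round $j$ of the keys between $L_j(\ell)$ and $U_j(\ell)$. $\log^* x=0$ for $x\le1$ and $\log^* x=1+\log^*(\log x)$ for $x>1$. ''With high probability'' means with probability tending to $1$ as $p\to\infty$ (the paper's bound is $1-e^{-p/(40\log p\log^* p)}$). *)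

(* Defs.v *)
From HB Require Import structures.
From mathcomp Require Import all_boot all_order all_algebra.
From mathcomp Require Import reals exp.
Set Implicit Arguments. Unset Strict Implicit. Unset Printing Implicit Defensive.
Import Order.TTheory GRing.Theory Num.Theory.
Local Open Scope ring_scope.

Section HP.
Variable R : realType.

Definition log2 (x : R) : R := ln x / ln 2.

Fixpoint logstar_iter (n : nat) (x : R) : nat :=
  if n is n'.+1 then (if x <= 1 then 0%N else (logstar_iter n' (log2 x)).+1)
  else 0%N.
(* fuel p.+1 is always sufficient for x = p (log* p <= p) *)
Definition logstar (p : nat) : nat := logstar_iter p.+1 p%:R.

Definition cHP : R := 3 * ln (5 / 2).
End HP.

(* Keys are identified with their ranks 0..N-1, N = p*m (m = N/p keys per
   processor).  Splitters are l in 'I_p with 0 < l. *)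
Section Algo.
Variables p m : nat.
Notation N := (p * m)%N.

(* key of rank i lies in the target range [N l/p, N l/p + N/p] of splitter l *)
Definition in_target (l : 'I_p) (i : 'I_N) : bool :=
  (l * m <= i <= l * m + m)%N.

(* S = set of all keys sampled before the round *)
Definition unachieved (S : {set 'I_N}) : {set 'I_p} :=
  [set l : 'I_p | (0 < l)%N & [forall i in S, ~~ in_target l i]].

(* L(l): largest sampled key of rank below N l/p, or the smallest key (rank 0) *)
Definition Lkey (S : {set 'I_N}) (l : 'I_p) : nat :=
  \max_(s in S | (s < l * m)%N) (s : nat).

(* U(l): smallest sampled key of rank above N l/p + N/p, or the largest key *)
Definition Ukey (S : {set 'I_N}) (l : 'I_p) : nat :=
  \big[minn/N.-1]_(s in S | (l * m + m < s)%N) (s : nat).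

Definition gamma (S : {set 'I_N}) : {set 'I_N} :=
  [set x : 'I_N | [exists l in unachieved S, (Lkey S l <= x <= Ukey S l)%N]].
End Algo.

Section Prob.
Variable R : realType.
Local Open Scope ring_scope.

Definition qprob (p m : nat) (S : {set 'I_(p * m)}) : R :=
  Num.min 1 (cHP R * p%:R / ((#|gamma S|)%:R * (logstar R p)%:R)).

(* probability that the set of keys sampled in the round (each key of gamma S
   independently with probability q) satisfies the event E *)
Definition round_prob (p m : nat) (S : {set 'I_(p * m)})
    (E : pred {set 'I_(p * m)}) : R :=
  let q := qprob S in
  \sum_(T : {set 'I_(p * m)} | (T \subset gamma S) && E T)
     q ^+ #|T| * (1 - q) ^+ (#|gamma S| - #|T|).
End Prob.

(* Main.v *)
Require Import Defs.
From HB Require Import structures.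
From mathcomp Require Import all_boot all_order all_algebra.
From mathcomp Require Import reals exp.
From mathcomp Require sequences.
From mathcomp Require Import ring lra zify.
Import Order.TTheory GRing.Theory Num.Theory.
Set Implicit Arguments. Unset Strict Implicit. Unset Printing Implicit Defensive.
Notation expR := sequences.expR.

Lemma card_interval n (A : {pred 'I_n}) a b :
  (forall x, x \in A -> (a <= x < b)%N) -> (#|A| <= b - a)%N.
Proof.
move=> H; rewrite cardE -(size_map val) -(size_iota a (b - a)).
apply: uniq_leq_size; first by rewrite map_inj_uniq ?enum_uniq //; exact: val_inj.
move=> y /mapP[x]; rewrite mem_enum => /H xab ->; rewrite mem_iota /=; lia.
Qed.

Lemma bigmin_le (I : finType) (P : pred I) (F : I -> nat) d i :
  P i -> (\big[minn/d]_(s | P s) F s <= F i)%N.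
Proof.
move=> Pi; have : i \in index_enum I by rewrite mem_index_enum.
elim: (index_enum I) => // a r IH; rewrite inE big_cons.
case/orP => [/eqP<-|ir]; first by rewrite Pi geq_minl.
case: ifP => _; last exact: IH.
exact: leq_trans (geq_minr _ _) (IH ir).
Qed.

Section Comb.
Variables (p m : nat) (S : {set 'I_(p * m)}).
Hypothesis m0 : (0 < m)%N.

Definition Rset (l : 'I_p) : {set 'I_(p * m)} := [set i | in_target l i].

Lemma unach_union T :
  unachieved (S :|: T) = [set l in unachieved S | [disjoint T & Rset l]].
Proof.
apply/setP => l; rewrite !inE disjoints_subset -andbA; congr (_ && _).
apply/forall_inP/andP => [H|[/forall_inP H1 /subsetP H2] i].
  split; first by apply/forall_inP => i iS; apply: H; rewrite inE iS.
  by apply/subsetP => i iT; rewrite !inE; apply: H; rewrite inE iT orbT.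
by rewrite inE => /orP[/H1 //|/H2]; rewrite !inE.
Qed.

Lemma Lkey_le (l : 'I_p) x :
  (forall s, s \in S -> (s < l * m)%N -> (s <= x)%N) -> (Lkey S l <= x)%N.
Proof. by move=> H; apply/bigmax_leqP => s /andP[sS slm]; apply: H. Qed.

Lemma le_Lkey (l : 'I_p) (s : 'I_(p * m)) : s \in S -> (s < l * m)%N -> (s <= Lkey S l)%N.
Proof. by move=> sS slm; rewrite /Lkey; apply: (leq_bigmax_cond (P := fun s : 'I_(p * m) => (s \in S) && (s < l * m)%N) (F := fun s : 'I_(p * m) => nat_of_ord s)); rewrite sS. Qed.

Lemma Ukey_le (l : 'I_p) (s : 'I_(p * m)) : s \in S -> (l * m + m < s)%N -> (Ukey S l <= s)%N.
Proof. by move=> sS slm; rewrite /Ukey; apply: bigmin_le; rewrite sS. Qed.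

Lemma le_Ukey (l : 'I_p) (x : 'I_(p * m)) :
  (forall s, s \in S -> (l * m + m < s)%N -> (x <= s)%N) -> (x <= Ukey S l)%N.
Proof.
move=> H; rewrite /Ukey; apply: (big_ind (fun v => x <= v)%N).
- by have := ltn_ord x; lia.
- by move=> a b xa xb; rewrite leq_min xa xb.
- by move=> s /andP[]; apply: H.
Qed.

Lemma Rsub l : l \in unachieved S -> Rset l \subset gamma S.
Proof.
move=> lU; apply/subsetP => x; rewrite !inE /in_target => /andP[lx xl].
apply/exists_inP; exists l => //; apply/andP; split.
  apply: Lkey_le => s _ sl; lia.
apply: le_Ukey => s _ sl; lia.
Qed.

Lemma card_R (l : 'I_p) : (l.+1 < p)%N -> (m.+1 <= #|Rset l|)%N.
Proof.
move=> lp.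
have H : forall k : 'I_m.+1, (l * m + k < p * m)%N.
  move=> k; have := ltn_ord k; have : (l.+2 * m <= p * m)%N by rewrite leq_mul2r lp orbT.
  rewrite !mulSnr; lia.
pose f (k : 'I_m.+1) : 'I_(p * m) := Ordinal (H k).
have finj : injective f by move=> a b [] /addnI /val_inj.
rewrite -[m.+1]card_ord -(card_imset _ finj); apply: subset_leq_card.
apply/subsetP => y /imsetP[k _ ->]; rewrite inE /in_target /=.
have := ltn_ord k; lia.
Qed.

Lemma far_disj (l l' : 'I_p) : (l.+2 <= l')%N -> [disjoint Rset l & Rset l'].
Proof.
move=> ll; rewrite -setI_eq0; apply/eqP/setP => i; rewrite !inE /in_target.
have : (l.+2 * m <= l' * m)%N by rewrite leq_mul2r ll orbT.
rewrite !mulSnr; lia.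
Qed.


Definition Wset (l : 'I_p) : {set 'I_(p * m)} :=
  [set x : 'I_(p * m) | (l * m - m <= x <= l * m + 2 * m)%N].

Lemma gamma_cover (x : 'I_(p * m)) : x \in gamma S ->
  exists2 l', l' \in unachieved S & x \in Wset l'.
Proof.
rewrite inE => /exists_inP[l lU /andP[Lx xU]].
move: (lU); rewrite inE => /andP[l0 /forall_inP lS].
have xN := ltn_ord x.
case: (ltnP x (l * m - m)) => [xlo|xlo].
  set a := (x %/ m)%N.
  have am1 : (a * m <= x)%N by apply: leq_trunc_div.
  have am2 : (x < a.+1 * m)%N by apply: ltn_ceil.
  rewrite mulSnr in am2.
  have al : (a.+2 <= l)%N.
    have : (a.+1 * m < l * m)%N by rewrite mulSnr; lia.
    by rewrite ltn_mul2r => /andP[_].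
  have jp : (a.+1 < p)%N by have := ltn_ord l; lia.
  have a2 : (a.+2 * m <= l * m)%N by rewrite leq_mul2r al orbT.
  rewrite !mulSnr in a2.
  exists (Ordinal jp); last by rewrite inE /= mulSnr; lia.
  rewrite inE /=.
  apply/forall_inP => i iS; apply/negP; rewrite /in_target /= mulSnr; move=> /andP[i1 i2].
  case: (ltnP i (l * m)) => il.
    have := le_Lkey iS il; lia.
  have : in_target l i by rewrite /in_target; apply/andP; split => //; lia.
  by apply/negP; apply: lS.
case: (ltnP (l * m + 2 * m) x) => [xhi|xhi]; last first.
  by exists l => //; rewrite inE xlo xhi.
set b := (x.-1 %/ m)%N.
have bm1 : (b * m <= x.-1)%N by apply: leq_trunc_div.
have bm2 : (x.-1 < b.+1 * m)%N by apply: ltn_ceil.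
rewrite mulSnr in bm2.
have lb : (l.+2 <= b)%N.
  have : (l.+2 * m < b.+1 * m)%N by rewrite !mulSnr; lia.
  by rewrite ltn_mul2r => /andP[_].
case: b lb bm1 bm2 => [|j] lb bm1 bm2; first by [].
rewrite mulSnr in bm1.
have jp : (j < p)%N.
  have : (j.+1 * m < p * m)%N by rewrite mulSnr; lia.
  by rewrite ltn_mul2r => /andP[_] /ltnW.
have lj : (l.+1 * m <= j * m)%N by rewrite leq_mul2r -ltnS lb orbT.
rewrite mulSnr in lj.
exists (Ordinal jp); last by rewrite inE /=; lia.
rewrite inE /=; apply/andP; split; first by lia.
apply/forall_inP => i iS; apply/negP; rewrite /in_target /=; move=> /andP[i1 i2].
case: (ltnP (l * m + m) i) => il.
  have := Ukey_le iS il; lia.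
have : in_target l i by rewrite /in_target; apply/andP; split => //; lia.
by apply/negP; apply: lS.
Qed.

Lemma card_W l : (#|Wset l| <= 3 * m + 1)%N.
Proof.
apply: (@leq_trans ((l * m + 2 * m).+1 - (l * m - m))); last by lia.
by apply: card_interval => x; rewrite inE; lia.
Qed.

Lemma gamma_card : (#|gamma S| <= #|unachieved S| * (3 * m + 1))%N.
Proof.
rewrite -sum1_card.
apply: (@leq_trans (\sum_(x in gamma S) \sum_(l in unachieved S) (x \in Wset l : nat))).
  apply: leq_sum => x /gamma_cover[l lU xW].
  by rewrite (bigD1 l) //= xW.
rewrite exchange_big /= -sum_nat_const; apply: leq_sum => l _.
apply: leq_trans (card_W l).
rewrite -sum1_card [X in (_ <= X)%N]big_mkcond [X in (X <= _)%N]big_mkcond /=.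
by apply: leq_sum => x _; case: (x \in gamma S); case: (x \in Wset l).
Qed.

End Comb.

Lemma sum_pred_le n (U : {set 'I_n}) (P : pred 'I_n) a b :
  (forall x, P x -> (a <= x < b)%N) -> (\sum_(x in U) (P x : nat) <= b - a)%N.
Proof.
move=> H; apply: (leq_trans _ (@card_interval n P a b _)); last by move=> x; apply: H.
rewrite -sum1_card [X in (_ <= X)%N]big_mkcond [X in (X <= _)%N]big_mkcond /=.
apply: leq_sum => x _; have -> : (x \in P) = P x by []. by case: (x \in U); case: (P x).
Qed.

Lemma disjU (X : finType) (T A B : {set X}) :
  [disjoint T & A :|: B] = [disjoint T & A] && [disjoint T & B].
Proof. by rewrite !disjoints_subset setCU subsetI. Qed.

Lemma near_bound (a x : nat) : ~~ (a.+2 <= x)%N && ~~ (x.+2 <= a)%N -> (a.-1 <= x < a.+2)%N.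
Proof. lia. Qed.
Lemma three a : (a.+2 - a.-1 <= 3)%N. Proof. lia. Qed.
Lemma last_bound (p x : nat) : x.+1 == p -> (p.-1 <= x < p)%N. Proof. lia. Qed.
Lemma one_bound (p : nat) : (p - p.-1 <= 1)%N. Proof. lia. Qed.

Local Open Scope ring_scope.

Section ProbGen.
Variables (R : realType) (T : finType) (G : {set T}) (q : R).
Hypothesis q0 : 0 <= q.
Hypothesis q1 : q <= 1.

Definition wt (X : {set T}) : R := q ^+ #|X| * (1 - q) ^+ (#|G| - #|X|).
Definition Ex (f : {set T} -> R) := \sum_(X : {set T} | X \subset G) wt X * f X.

Lemma wt_ge0 X : 0 <= wt X.
Proof. by rewrite /wt mulr_ge0 // exprn_ge0 // subr_ge0. Qed.

Lemma avoid (A : {set T}) :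
  \sum_(X : {set T} | (X \subset G) && [disjoint X & A]) wt X = (1 - q) ^+ #|A :&: G|.
Proof.
pose F i : R := if i \in G :\: A then q else 0.
pose H i : R := if i \in G then 1 - q else 1.
have := @bigA_distr R 0 1 *%R +%R T F H.
have -> : \prod_i (F i + H i) = \prod_i (if i \in A :&: G then (1 - q : R) else 1).
  apply: eq_bigr => i _.
  rewrite /F /H !inE; case: (i \in A); case: (i \in G) => /=; ring.
rewrite -big_mkcond /= prodr_const => ->.
rewrite big_mkcond /=; apply: congr_big => // J _.
rewrite -subsetD.
case: ifP => [sJ|nsJ].
  rewrite (bigID (fun i => i \in J)) /=.
  rewrite (eq_bigr (fun _ => q)); last first.
    by move=> i iJ; rewrite iJ /F (subsetP sJ).
  rewrite prodr_const.
  rewrite (eq_bigr (fun i => if i \in G :\: J then 1 - q else 1)); last first.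
    by move=> i /negbTE iJ; rewrite iJ /H inE iJ.
  rewrite -big_mkcondr /= (eq_bigl (mem (G :\: J))); last first.
    by move=> i; rewrite !inE; case: (i \in J).
  rewrite prodr_const /wt.
  have sJG : J \subset G by move: sJ; rewrite subsetD => /andP[].
  rewrite cardsD (setIidPr sJG).
  congr (_ ^+ _ * _ ^+ _); apply: eq_card => i; by rewrite !inE.
have [i iJ niGA] : exists2 i, i \in J & i \notin G :\: A.
  apply/exists_inP; rewrite -negb_forall_in; apply/negP => /forall_inP H1.
  by move/negP: nsJ; apply; apply/subsetP => x /H1.
rewrite (bigD1 i) //= iJ /F (negbTE niGA) mul0r //.
Qed.

Lemma Ex_ind (A : {set T}) :
  Ex (fun X => ([disjoint X & A] : bool)%:R) = (1 - q) ^+ #|A :&: G|.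
Proof.
rewrite -avoid /Ex big_mkcondr /=; apply: eq_bigr => X _.
by case: ifP => _; rewrite ?mulr1 ?mulr0.
Qed.

Lemma Ex_ext f g : (forall X, f X = g X) -> Ex f = Ex g.
Proof. by move=> e; apply: eq_bigr => X _; rewrite e. Qed.

Lemma Ex1 : Ex (fun=> 1) = 1.
Proof.
have h : Ex (fun X => ([disjoint X & set0] : bool)%:R) = 1.
  by rewrite Ex_ind set0I cards0 expr0.
rewrite -[RHS]h /Ex; apply: eq_bigr => X _.
by rewrite disjoint_sym disjoints_subset sub0set.
Qed.

Lemma ExD f g : Ex (fun X => f X + g X) = Ex f + Ex g.
Proof. by rewrite /Ex -big_split; apply: eq_bigr => X _; rewrite mulrDr. Qed.

Lemma ExZ c f : Ex (fun X => c * f X) = c * Ex f.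
Proof. by rewrite /Ex mulr_sumr; apply: eq_bigr => X _; rewrite mulrCA. Qed.

Lemma Ex_sum (I : finType) (P : pred I) (f : I -> {set T} -> R) :
  Ex (fun X => \sum_(i | P i) f i X) = \sum_(i | P i) Ex (f i).
Proof.
rewrite /Ex; under eq_bigr do rewrite mulr_sumr.
exact: exchange_big.
Qed.

Lemma Ex_var f :
  Ex (fun X => (f X - Ex f) ^+ 2) = Ex (fun X => f X ^+ 2) - Ex f ^+ 2.
Proof.
set mu := Ex f.
rewrite (Ex_ext (g := fun X => f X ^+ 2 + ((- (2 * mu)) * f X + mu ^+ 2 * 1))); last first.
  by move=> X; ring.
rewrite ExD ExD ExZ ExZ Ex1 -/mu; ring.
Qed.

Lemma chebyshev f (M mu : R) : mu < M ->
  \sum_(X : {set T} | (X \subset G) && (M < f X)) wt X <=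
  Ex (fun X => (f X - mu) ^+ 2) / (M - mu) ^+ 2.
Proof.
move=> muM; have d0 : 0 < (M - mu) ^+ 2 by rewrite exprn_gt0 // subr_gt0.
rewrite /Ex mulr_suml big_mkcondr /=; apply: ler_sum => X _.
case: ifP => fM; last by rewrite -mulrA mulr_ge0 ?wt_ge0 // divr_ge0 // sqr_ge0.
rewrite -mulrA ler_peMr ?wt_ge0 // ler_pdivlMr // mul1r.
have fM' : M <= f X by rewrite ltW.
rewrite ler_pXn2r ?nnegrE ?subr_ge0 ?lerD2r // ltW //.
exact: (lt_le_trans muM).
Qed.

End ProbGen.

Section Real.
Variable R : realType.

Lemma ln_le_sub1 (z : R) : 0 < z -> ln z <= z - 1.
Proof.
move=> z0; rewrite -ler_expR lnK ?posrE //.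
by have := expR_ge1Dx (z - 1); rewrite addrC subrK.
Qed.

Lemma ln2_ge : 1 / 2 <= ln (2 : R).
Proof.
rewrite -ler_expR lnK ?posrE //.
have h := expR_ge1Dx (- (1 / 2) : R).
have e0 := expR_gt0 (1 / 2 : R).
rewrite expRN in h.
have : (1 + - (1/2)) * expR (1/2) <= (expR (1/2))^-1 * expR (1 / 2 : R).
  by rewrite ler_pM2r.
rewrite mulVf ?gt_eqF //; lra.
Qed.

Lemma ln2_gt0 : 0 < ln (2 : R).
Proof. have := ln2_ge; lra. Qed.

Lemma log2_le (y : R) : 2 <= y -> log2 y <= y - 1.
Proof.
move=> y2; rewrite /log2 ler_pdivrMr ?ln2_gt0 //.
have hy : 0 < y / 2 by lra.
have h2 : (0 : R) < 2 by lra.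
have -> : ln y = ln 2 + ln (y / 2).
  by rewrite -lnM ?posrE // mulrC divfK // pnatr_eq0.
have := ln_le_sub1 hy.
have := ln2_ge; nra.
Qed.

Lemma logstar_iter_le n (y : R) :
  ((logstar_iter n y)%:R <= if y <= 1 then 0 else 1 + y).
Proof.
elim: n y => [|n IH] y /=; first by case: ifP => //; lra.
case: ifP => // y1; rewrite -addn1 natrD addrC lerD2l.
apply: le_trans (IH _) _.
case: ifP => [_|l1]; first by lra.
have y2 : 2 <= y.
  move/negbT: l1; rewrite -ltNge /log2 ltr_pdivlMr ?ln2_gt0 // mul1r => h.
  rewrite leNgt; apply/negP => y2.
  have : ln y <= ln 2 by rewrite ler_ln ?posrE //; lra.
  lra.
have := log2_le y2; lra.
Qed.

Lemma logstar_ge1 p : (2 <= p)%N -> 1 <= (logstar R p)%:R :> R.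
Proof.
move=> p2; rewrite /logstar /=.
have -> : (p%:R <= 1 :> R) = false.
  by apply/negbTE; rewrite -ltNge (ltr_nat R 1 p).
by rewrite ler1n.
Qed.

Lemma log2_ge1 p : (2 <= p)%N -> 1 <= log2 (p%:R : R).
Proof.
move=> p2; rewrite /log2 ler_pdivlMr ?ln2_gt0 // mul1r ler_ln ?posrE //.
- by rewrite (ler_nat R 2 p).
- by rewrite (ltr_nat R 0 p); lia.
Qed.

Lemma logstar_le p : (2 <= p)%N -> (logstar R p)%:R <= 2 + log2 (p%:R : R) :> R.
Proof.
move=> p2; rewrite /logstar /=.
have -> : (p%:R <= 1 :> R) = false.
  by apply/negbTE; rewrite -ltNge (ltr_nat R 1 p).
rewrite -addn1 natrD addrC.
have := logstar_iter_le p (log2 p%:R); have := log2_ge1 p2.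
case: ifP => _; lra.
Qed.

Lemma A_large (K : R) : 0 <= K -> exists P0 : nat, forall p : nat, (P0 <= p)%N ->
  K <= p%:R / (log2 (p%:R : R) * (logstar R p)%:R).
Proof.
move=> K0.
pose P0 := maxn 2 (Num.bound ((192 * K) ^+ 2)).
exists P0 => p pP0.
have p2 : (2 <= p)%N by move: pP0; rewrite geq_max => /andP[].
have pb : (192 * K) ^+ 2 <= p%:R.
  have := archi_boundP (sqr_ge0 (192 * K)) => /ltW h; apply: le_trans h _.
  by rewrite ler_nat; move: pP0; rewrite geq_max => /andP[].
have pp : 0 < (p%:R : R) by rewrite (ltr_nat R 0 p); lia.
set r := (p%:R : R) `^ (1/4).
have r0 : 0 < r by apply: powR_gt0.
have r4 : r ^+ 4 = p%:R.
  rewrite -powR_mulrn ?ltW // /r -powRrM mul1r mulVf ?powRr1 ?ltW // pnatr_eq0 //.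
have lnp : ln (p%:R : R) <= 4 * r.
  have : ln r = 1 / 4 * ln (p%:R : R) by rewrite /r ln_powR.
  have := ln_le_sub1 r0; lra.
set lg := log2 (p%:R : R).
have lg1 : 1 <= lg by apply: log2_ge1.
have lgr : lg <= 8 * r.
  rewrite /lg /log2 ler_pdivrMr ?ln2_gt0 //; have := ln2_ge; nra.
have L1 := logstar_ge1 p2.
have L2 := logstar_le p2.
set L := ((logstar R p)%:R : R) in L1 L2 *.
rewrite -/lg ler_pdivlMr; last by apply: mulr_gt0; lra.
have r2 : 192 * K <= r ^+ 2.
  have e4 : r ^+ 4 = r ^+ 2 * r ^+ 2 by rewrite -exprD.
  have q0 : 0 <= r ^+ 2 by apply: exprn_ge0; apply: ltW.
  rewrite leNgt; apply/negP => h.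
  have : r ^+ 4 < (192 * K) ^+ 2.
    rewrite e4 expr2; apply: (le_lt_trans (y := r ^+ 2 * (192 * K))).
      by apply: ler_pM => //; apply: ltW.
    by rewrite ltr_pM2r //; [] ; apply: le_lt_trans h.
  lra.
have : lg * L <= 192 * r ^+ 2.
  have e2 : r ^+ 2 = r * r by rewrite expr2.
  rewrite -/lg in L2; rewrite e2.
  have h1 : lg * L <= lg * (2 + lg) by rewrite ler_pM2l //; lra.
  have h2 : lg * lg <= (8 * r) * (8 * r) by apply: ler_pM => //; lra.
  nra.
have e4 : r ^+ 4 = r ^+ 2 * r ^+ 2 by rewrite -exprD.
rewrite -r4 e4; nra.
Qed.

End Real.

Theorem lemma2p5 (R : realType) :
  forall eps : R, 0 < eps -> exists P0 : nat, forall (p m : nat) (t : R),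
    (P0 <= p)%N -> (0 < m)%N -> 1 <= t ->
    forall S : {set 'I_(p * m)},
      (#|unachieved S|)%:R <= p%:R / (t * (logstar R p)%:R) ->
      round_prob R S (fun T =>
        Num.max (p%:R / (log2 (p%:R : R) * (logstar R p)%:R))
                (p%:R / (t * 2 `^ t * (logstar R p)%:R))
          < (#|unachieved (S :|: T)|)%:R) <= eps.
Proof.
move=> eps e0.
have K0 : 0 <= 10 + 300 / eps.
  have : 0 < 300 / eps by rewrite divr_gt0.
  lra.
have [P1 HP1] := A_large K0.
exists (maxn 2 P1) => p m t pP m0 t1 S hk.
have p2 : (2 <= p)%N by move: pP; rewrite geq_max => /andP[].
have hA := HP1 p ltac:(by move: pP; rewrite geq_max => /andP[]).
rewrite /round_prob /=.
set L := ((logstar R p)%:R : R) in hk hA *.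
set lg := log2 (p%:R : R) in hA *.
have L1 : 1 <= L := logstar_ge1 R p2.
have lg1 : 1 <= lg := log2_ge1 R p2.
set A := p%:R / (lg * L) in hA *.
set B := p%:R / (t * 2 `^ t * L).
set M := Num.max A B.
have AM : A <= M by rewrite le_max lexx.
have BM : B <= M by rewrite le_max lexx orbT.
have pp : 0 < (p%:R : R) by rewrite ltr0n; lia.
have t2 : 0 < 2 `^ t by apply: powR_gt0.
have B0 : 0 <= B.
  by apply: divr_ge0; [apply: ltW | apply: mulr_ge0; [apply: mulr_ge0|]; lra].
set G := gamma S.
set U := unachieved S.
set q := qprob R S.
set k := #|U| in hk *.
have ln25 : 0 < ln (5/2 : R) by apply: ln_gt0; lra.
have c0 : 0 < cHP R by rewrite /cHP mulr_gt0.
have q0 : 0 <= q.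
  rewrite /q /qprob le_min ler01 /= divr_ge0 ?mulr_ge0 // ?ltW //.
have q1 : q <= 1 by rewrite /q /qprob ge_min lexx.
set r : R := 1 - q.
have r0 : 0 <= r by rewrite /r subr_ge0.
have r1 : r <= 1 by rewrite /r; lra.
pose f T := (#|unachieved (S :|: T)|%:R : R).
change (\sum_(T : {set 'I_(p * m)} | (T \subset G) && (M < f T)) wt G q T <= eps).
pose pi (l : 'I_p) := r ^+ #|Rset m l|.
have hf : forall T, f T = \sum_(l in U) ([disjoint T & Rset m l] : bool)%:R.
  move=> T; rewrite /f unach_union -/U.
  transitivity (\sum_(l in [set l in U | [disjoint T & Rset m l]]) (1 : R)).
    by rewrite sumr_const.
  rewrite (eq_bigl (fun l => (l \in U) && [disjoint T & Rset m l])); last first.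
    by move=> l; rewrite inE.
  by rewrite big_mkcondr /=; apply: eq_bigr => l _; case: ifP.
have hRG : forall l, l \in U -> Rset m l \subset G by move=> l lU; apply: Rsub.
have hmu : Ex G q f = \sum_(l in U) pi l.
  rewrite (Ex_ext G q hf) Ex_sum; apply: eq_bigr => l lU.
  by rewrite Ex_ind (setIidPl (hRG l lU)).
have hmu2 : Ex G q (fun T => f T ^+ 2) =
    \sum_(l in U) \sum_(l' in U) r ^+ #|Rset m l :|: Rset m l'|.
  have e : forall T, f T ^+ 2 = \sum_(l in U) \sum_(l' in U)
      ([disjoint T & Rset m l :|: Rset m l'] : bool)%:R.
    move=> T; rewrite hf expr2 mulr_suml; apply: eq_bigr => l _.
    rewrite mulr_sumr; apply: eq_bigr => l' _.
    by rewrite disjU; case: [disjoint T & _]; case: [disjoint T & _];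
      rewrite ?mulr1 ?mulr0 ?mul0r.
  rewrite (Ex_ext G q e) Ex_sum; apply: eq_bigr => l lU.
  rewrite Ex_sum; apply: eq_bigr => l' l'U.
  by rewrite Ex_ind (setIidPl _) // subUset !hRG.
have pi0 : forall l, 0 <= pi l by move=> l; apply: exprn_ge0.
pose near (l l' : 'I_p) := ~~ (l.+2 <= l')%N && ~~ (l'.+2 <= l)%N.
have hnear : forall l : 'I_p, \sum_(l' in U) ((near l l' : bool) : nat)%:R <= 3 :> R.
  move=> l; rewrite -natr_sum -[3 : R]/(3%:R) ler_nat.
  apply: (leq_trans (sum_pred_le U (P := near l) (a := l.-1) (b := l.+2) _)).
    by move=> x; apply: near_bound.
  exact: three.
have hvar : Ex G q (fun T => f T ^+ 2) - Ex G q f ^+ 2 <= 3 * Ex G q f.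
  rewrite hmu2 hmu.
  set mu := \sum_(l in U) pi l.
  have sq : mu ^+ 2 = \sum_(l in U) \sum_(l' in U) pi l * pi l'.
    by rewrite expr2 mulr_suml; apply: eq_bigr => l _; rewrite mulr_sumr.
  rewrite sq lerBlDr.
  apply: (le_trans (y := \sum_(l in U) \sum_(l' in U)
      (pi l * pi l' + ((near l l' : bool) : nat)%:R * pi l))).
    apply: ler_sum => l lU; apply: ler_sum => l' l'U.
    case hn: (near l l').
      rewrite mul1r; apply: (le_trans (y := pi l)); last first.
        by rewrite lerDr mulr_ge0.
      by apply: ler_wiXn2l => //; apply: subset_leq_card; apply: subsetUl.
    have dj : [disjoint Rset m l & Rset m l'].
      move: hn => /negbT; rewrite /near negb_and !negbK => /orP[h|h].
        exact: far_disj.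
      by rewrite disjoint_sym; apply: far_disj.
    rewrite mul0r addr0 /pi cardsU (disjoint_setI0 dj) cards0 subn0 exprD.
    by [].
  under eq_bigr do rewrite big_split.
  rewrite big_split /= addrC lerD2r /mu mulr_sumr.
  apply: ler_sum => l lU.
  by rewrite -mulr_suml mulrC [X in _ <= X]mulrC ler_wpM2l.
have pi1 : forall l, pi l <= 1 by move=> l; apply: exprn_ile1.
set e := expR (- (t * ln (5/2 : R))).
have e0' : 0 <= e by apply: ltW; apply: expR_gt0.
have tL : 0 < t * L by apply: mulr_gt0; lra.
have hk' : k%:R * (t * L) <= p%:R by rewrite -ler_pdivlMr.
have key : forall l, l \in U -> (l.+1 < p)%N -> pi l <= e.
  move=> l lU lp.
  have cR := card_R m0 lp.
  have Gpos : (0 < #|G|)%N.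
    exact: (leq_trans (leq_trans (ltn0Sn m) cR) (subset_leq_card (hRG l lU))).
  have gk := gamma_card S m0.
  set g := (#|G|%:R : R).
  have g0 : 0 < g by rewrite /g ltr0n.
  have gk' : g <= k%:R * (3 * m%:R + 1).
    by move: gk; rewrite -(ler_nat R) natrM natrD natrM.
  set z := cHP R * p%:R / (g * L).
  have [z1|z1] := leP 1 z.
    have hq1 : q = 1 by rewrite /q /qprob min_l.
    rewrite /pi /r hq1 subrr expr0n.
    by case: eqP => [h|_] //; move: cR; rewrite h.
  have hq : q = z by rewrite /q /qprob min_r // ltW.
  apply: (le_trans (y := r ^+ m.+1)); first by apply: ler_wiXn2l.
  apply: (le_trans (y := expR (- q) ^+ m.+1)).
    apply: lerXn2r; rewrite ?nnegrE //; first by apply: ltW; apply: expR_gt0.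
    by have := expR_ge1Dx (- q); rewrite /r.
  rewrite -expRM_natr /e ler_expR mulNr lerN2 hq /z /cHP mulrAC ler_pdivlMr; last first.
    by apply: mulr_gt0; lra.
  have h1 : g * (t * L) <= k%:R * (3 * m%:R + 1) * (t * L).
    by apply: ler_wpM2r => //; apply: ltW.
  have h2 : k%:R * (3 * m%:R + 1) * (t * L) <= p%:R * (3 * m%:R + 1).
    rewrite mulrAC; apply: ler_wpM2r => //.
    by apply: addr_ge0 => //; apply: mulr_ge0.
  have h3 : p%:R * (3 * m%:R + 1) <= 3 * p%:R * (m.+1)%:R :> R.
    rewrite -addn1 natrD; have : (0 : R) <= m%:R by []. nra.
  have h4 : g * (t * L) <= 3 * p%:R * (m.+1)%:R by lra.
  rewrite (_ : t * ln (5/2) * (g * L) = ln (5/2) * (g * (t * L))); last by ring.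
  rewrite (_ : 3 * ln (5/2) * p%:R * (m.+1)%:R = ln (5/2) * (3 * p%:R * (m.+1)%:R)); last by ring.
  by apply: ler_wpM2l => //; apply: ltW.
have te : 2 `^ t * e <= 4 / 5.
  have two0 : (2 : R) != 0 by rewrite pnatr_eq0.
  rewrite /powR (negbTE two0) /e -expRD.
  have h45 : expR (ln 2 - ln (5/2)) = 4 / 5 :> R.
    have h52 : (0 : R) < 5 / 2 by lra.
    by rewrite expRD expRN !lnK ?posrE //; field.
  rewrite -h45 ler_expR.
  have : ln 2 <= ln (5/2 : R) by rewrite ler_ln ?posrE //; lra.
  nra.
have hmub : Ex G q f <= 4 / 5 * M + 1.
  rewrite hmu.
  have pile : forall l, l \in U -> pi l <= e + ((l.+1 == p : bool) : nat)%:R.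
    move=> l lU; case: (boolP (l.+1 == p)) => h /=.
      by have := pi1 l; lra.
    have lp : (l.+1 < p)%N by rewrite ltn_neqAle h ltn_ord.
    by rewrite addr0; apply: key.
  apply: (le_trans (ler_sum _ pile)).
  rewrite big_split /= sumr_const -/k.
  have s1 : \sum_(l in U) ((l.+1 == p : bool) : nat)%:R <= 1 :> R.
    rewrite -natr_sum -[1 : R]/(1%:R) ler_nat.
    apply: (leq_trans (sum_pred_le U (P := fun l : 'I_p => l.+1 == p) (a := p.-1) (b := p) _)).
      by move=> x; apply: last_bound.
    exact: one_bound.
  have s2 : e *+ k <= 4 / 5 * B.
    rewrite -[e *+ k]mulr_natl.
    apply: (le_trans (y := p%:R / (t * L) * e)); first exact: (ler_wpM2r e0' hk).
    have -> : p%:R / (t * L) * e = B * (2 `^ t * e).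
      rewrite /B; field; apply/and3P; split; rewrite ?gt_eqF //; lra.
    by rewrite mulrC; exact: (ler_wpM2r B0 te).
  have : 4 / 5 * B <= 4 / 5 * M by apply: ler_wpM2l => //; lra.
  lra.
set mu := Ex G q f in hvar hmub *.
have mu0 : 0 <= mu by rewrite /mu hmu; apply: sumr_ge0 => l _; apply: pi0.
have M10 : 10 + 300 / eps <= M by apply: le_trans hA AM.
have h300 : 0 < 300 / eps by rewrite divr_gt0.
have muM : mu < M by lra.
apply: (le_trans (chebyshev G q0 q1 f muM)).
rewrite Ex_var -/mu.
have d0 : 0 < (M - mu) ^+ 2 by rewrite exprn_gt0 // subr_gt0.
apply: (le_trans (y := 3 * mu / (M - mu) ^+ 2)).
  by apply: ler_wpM2r => //; rewrite invr_ge0 ltW.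
rewrite ler_pdivrMr //.
have d : M / 10 <= M - mu by lra.
have eM : 300 <= eps * M.
  have : 300 / eps <= M by lra.
  by rewrite ler_pdivrMr // mulrC.
have M0 : 0 <= M by lra.
have sq : (M / 10) ^+ 2 <= (M - mu) ^+ 2.
  by apply: lerXn2r; rewrite ?nnegrE //; lra.
have h1 : 300 * M <= eps * M * M by apply: ler_wpM2r.
have h2 : eps * (M / 10) ^+ 2 <= eps * (M - mu) ^+ 2 by apply: ler_wpM2l => //; apply: ltW.
have h3 : eps * (M / 10) ^+ 2 = eps * M * M / 100 by rewrite expr2; field.
lra.
Qed.
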